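(* Let $g\in C(\mathbb{R},\mathbb{R})$. Then $\mathcal{K}_{(-\infty,g]}=\mathcal{K}_{[g,\infty)}=\{\mathrm{CL}(E):E\in\mathrm{CL}(\mathbb{R})\}$, where $(-\infty,g]=\{f\in C(\mathbb{R},\mathbb{R}):f\le g\}$ and $[g,\infty)=\{f\in C(\mathbb{R},\mathbb{R}):g\le f\}$.
   Context: $f\le g$ means $f(x)\le g(x)$ for all $x\in\mathbb{R}$. For a closed set $E\subseteq\mathbb{R}$, $\mathrm{CL}(E)$ denotes the family of all closed subsets of $E$. For $\mathcal{G}\subseteq C(\mathbb{R},\mathbb{R})$ let $R_\mathcal{G}=\{(f,E)\in C(\mathbb{R},\mathbb{R})\times\mathrm{CL}(\mathbb{R}):(\exists h\in\mathcal{G})\, f\restriction E=h\restriction E\}$; for $\mathcal{F}\subseteq C(\mathbb{R},\mathbb{R})$ put $E_\mathcal{G}(\mathcal{F})=\{E\in\mathrm{CL}(\mathbb{R}):(\forall f\in\mathcal{F})\,(f,E)\in R_\mathcal{G}\}$, and let $\mathcal{K}_\mathcal{G}=\{E_\mathcal{G}(\mathcal{F}):\mathcal{F}\subseteq C(\mathbb{R},\mathbb{R})\}$. *)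

(* Defs.v *)
From Stdlib Require Export Reals.
Open Scope R_scope.

Definition isC (f : R -> R) : Prop := continuity f.

Definition CL (E : R -> Prop) : (R -> Prop) -> Prop :=
  fun A => closed_set A /\ (forall x, A x -> E x).

Definition R_G (G : (R -> R) -> Prop) (f : R -> R) (E : R -> Prop) : Prop :=
  isC f /\ closed_set E /\ exists h, G h /\ (forall x, E x -> f x = h x).

Definition E_G (G F : (R -> R) -> Prop) : (R -> Prop) -> Prop :=
  fun E => closed_set E /\ (forall f, F f -> R_G G f E).

Definition fam_eq (X Y : (R -> Prop) -> Prop) : Prop := forall A, X A <-> Y A.

Definition in_K (G : (R -> R) -> Prop) (X : (R -> Prop) -> Prop) : Prop :=
  exists F, (forall f, F f -> isC f) /\ fam_eq X (E_G G F).

Definition is_CL_family (X : (R -> Prop) -> Prop) : Prop :=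
  exists E, closed_set E /\ fam_eq X (CL E).

Definition below (g : R -> R) : (R -> R) -> Prop :=
  fun f => isC f /\ (forall x, f x <= g x).
Definition above (g : R -> R) : (R -> R) -> Prop :=
  fun f => isC f /\ (forall x, g x <= f x).

(* Main.v *)
Require Import Defs.
From Stdlib Require Import Reals.
From Stdlib Require Import Lra Classical FunctionalExtensionality.
Open Scope R_scope.

Lemma Rmin_form a b : Rmin a b = / 2 * ((a + b) - Rabs (a - b)).
Proof. unfold Rmin; destruct (Rle_dec a b); unfold Rabs; destruct (Rcase_abs (a - b)); lra. Qed.
Lemma Rmax_form a b : Rmax a b = / 2 * ((a + b) + Rabs (a - b)).
Proof. unfold Rmax; destruct (Rle_dec a b); unfold Rabs; destruct (Rcase_abs (a - b)); lra. Qed.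

Lemma cont_min f g : continuity f -> continuity g -> continuity (fun x => Rmin (f x) (g x)).
Proof.
  intros Hf Hg.
  replace (fun x => Rmin (f x) (g x)) with (fun x => / 2 * ((f x + g x) - Rabs (f x - g x)))
    by (apply functional_extensionality; intro; now rewrite Rmin_form).
  exact (continuity_scal _ _ (continuity_minus _ _ (continuity_plus _ _ Hf Hg)
     (continuity_comp _ _ (continuity_minus _ _ Hf Hg) Rcontinuity_abs))).
Qed.
Lemma cont_max f g : continuity f -> continuity g -> continuity (fun x => Rmax (f x) (g x)).
Proof.
  intros Hf Hg.
  replace (fun x => Rmax (f x) (g x)) with (fun x => / 2 * ((f x + g x) + Rabs (f x - g x)))
    by (apply functional_extensionality; intro; now rewrite Rmax_form).
  exact (continuity_scal _ _ (continuity_plus _ _ (continuity_plus _ _ Hf Hg)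
     (continuity_comp _ _ (continuity_minus _ _ Hf Hg) Rcontinuity_abs))).
Qed.

Lemma cont_tent (x r : R) : continuity (fun y => Rmax 0 (r - Rabs (y - x))).
Proof.
  apply (cont_max (fun _ => 0) (fun y => r - Rabs (y - x))).
  - apply continuity_const; intros a b; reflexivity.
  - exact (continuity_minus _ _ (continuity_const (fun _ => r) (fun _ _ => eq_refl))
      (continuity_comp _ _ (continuity_minus _ _ (derivable_continuous _ derivable_id)
         (continuity_const (fun _ => x) (fun _ _ => eq_refl))) Rcontinuity_abs)).
Qed.

Lemma pos_nbhd (h : R -> R) x : continuity h -> 0 < h x ->
  exists delta : posreal, forall y, Rabs (y - x) < delta -> 0 < h y.
Proof.
  intros Hc Hx.
  destruct (Hc x (h x) Hx) as [alp [Ha H]].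
  exists (mkposreal alp Ha); simpl; intros y Hy.
  destruct (Req_dec x y) as [<-|Hne]; [assumption|].
  assert (Hd := H y (conj (conj I Hne) Hy)).
  unfold R_dist in Hd. apply Rabs_def2 in Hd. lra.
Qed.

Lemma closed_le (F : (R -> R) -> Prop) (g : R -> R) (s : bool) :
  continuity g -> (forall f, F f -> isC f) ->
  closed_set (fun x => forall f, F f -> if s then f x <= g x else g x <= f x).
Proof.
  intros Hg HF x Hx.
  destruct (not_all_ex_not _ _ Hx) as [f Hf].
  apply imply_to_and in Hf; destruct Hf as [Hf Hlt].
  destruct (pos_nbhd (fun y => if s then f y - g y else g y - f y) x) as [d Hd].
  - destruct s.
    + exact (continuity_minus _ _ (HF f Hf) Hg).
    + exact (continuity_minus _ _ Hg (HF f Hf)).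
  - destruct s; lra.
  - exists d; intros y Hy Hc. specialize (Hd y Hy). specialize (Hc f Hf).
    destruct s; lra.
Qed.

Lemma tent_props (x : R) (d : posreal) (E : R -> Prop) :
  (forall y, Rabs (y - x) < d -> ~ E y) ->
  (forall y, E y -> Rmax 0 (d - Rabs (y - x)) = 0) /\ Rmax 0 (d - Rabs (x - x)) = d.
Proof.
  intros H; split.
  - intros y Hy. apply Rmax_left.
    destruct (Rlt_le_dec (Rabs (y - x)) d) as [h|h]; [exfalso; exact (H y h Hy)|lra].
  - replace (x - x) with 0 by ring. rewrite Rabs_R0. rewrite Rmax_right; [ring | destruct d; simpl; lra].
Qed.

Lemma K_below (g : R -> R) (hg : continuity g) (X : (R -> Prop) -> Prop) :
  in_K (below g) X <-> is_CL_family X.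
Proof.
  split.
  - intros [F [HF Heq]].
    exists (fun x => forall f, F f -> f x <= g x).
    split; [exact (closed_le F g true hg HF)|].
    intros A; rewrite (Heq A); unfold E_G, CL, R_G; split.
    + intros [HA H]; split; [exact HA|]. intros x Hx f Hf.
      destruct (H f Hf) as [_ [_ [h [[_ Hh] Hfh]]]]. rewrite (Hfh x Hx); apply Hh.
    + intros [HA H]; split; [exact HA|]. intros f Hf; split; [exact (HF f Hf)|split; [exact HA|]].
      exists (fun x => Rmin (f x) (g x)).
      split; [split; [exact (cont_min _ _ (HF f Hf) hg) | intros; apply Rmin_r]|].
      intros x Hx; symmetry; apply Rmin_left; exact (H x Hx f Hf).
  - intros [E [HE Heq]].
    exists (fun f => isC f /\ forall y, E y -> f y <= g y).
    split; [intros f [Hf _]; exact Hf|].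
    intros A; rewrite (Heq A); unfold E_G, CL, R_G; split.
    + intros [HA H]; split; [exact HA|]. intros f [Hf Hfe]; split; [exact Hf|split; [exact HA|]].
      exists (fun x => Rmin (f x) (g x)).
      split; [split; [exact (cont_min _ _ Hf hg) | intros; apply Rmin_r]|].
      intros x Hx; symmetry; apply Rmin_left; exact (Hfe x (H x Hx)).
    + intros [HA H]; split; [exact HA|]. intros x Hx.
      destruct (classic (E x)) as [e|ne]; [exact e|exfalso].
      destruct (HE x ne) as [d Hd].
      destruct (tent_props x d E Hd) as [T0 Tx].
      set (f := fun y => g y + Rmax 0 (d - Rabs (y - x))).
      assert (Hf : isC f /\ forall y, E y -> f y <= g y).
      { split; [exact (continuity_plus _ _ hg (cont_tent x d))|].
        intros y Ey; unfold f; rewrite (T0 y Ey); lra. }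
      destruct (H f Hf) as [_ [_ [h [[_ Hh] Hfh]]]].
      specialize (Hfh x Hx). specialize (Hh x). unfold f in Hfh; rewrite Tx in Hfh.
      destruct d; simpl in *; lra.
Qed.

Lemma K_above (g : R -> R) (hg : continuity g) (X : (R -> Prop) -> Prop) :
  in_K (above g) X <-> is_CL_family X.
Proof.
  split.
  - intros [F [HF Heq]].
    exists (fun x => forall f, F f -> g x <= f x).
    split; [exact (closed_le F g false hg HF)|].
    intros A; rewrite (Heq A); unfold E_G, CL, R_G; split.
    + intros [HA H]; split; [exact HA|]. intros x Hx f Hf.
      destruct (H f Hf) as [_ [_ [h [[_ Hh] Hfh]]]]. rewrite (Hfh x Hx); apply Hh.
    + intros [HA H]; split; [exact HA|]. intros f Hf; split; [exact (HF f Hf)|split; [exact HA|]].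
      exists (fun x => Rmax (f x) (g x)).
      split; [split; [exact (cont_max _ _ (HF f Hf) hg) | intros; apply Rmax_r]|].
      intros x Hx; symmetry; apply Rmax_left; exact (H x Hx f Hf).
  - intros [E [HE Heq]].
    exists (fun f => isC f /\ forall y, E y -> g y <= f y).
    split; [intros f [Hf _]; exact Hf|].
    intros A; rewrite (Heq A); unfold E_G, CL, R_G; split.
    + intros [HA H]; split; [exact HA|]. intros f [Hf Hfe]; split; [exact Hf|split; [exact HA|]].
      exists (fun x => Rmax (f x) (g x)).
      split; [split; [exact (cont_max _ _ Hf hg) | intros; apply Rmax_r]|].
      intros x Hx; symmetry; apply Rmax_left; exact (Hfe x (H x Hx)).
    + intros [HA H]; split; [exact HA|]. intros x Hx.
      destruct (classic (E x)) as [e|ne]; [exact e|exfalso].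
      destruct (HE x ne) as [d Hd].
      destruct (tent_props x d E Hd) as [T0 Tx].
      set (f := fun y => g y - Rmax 0 (d - Rabs (y - x))).
      assert (Hf : isC f /\ forall y, E y -> g y <= f y).
      { split; [exact (continuity_minus _ _ hg (cont_tent x d))|].
        intros y Ey; unfold f; rewrite (T0 y Ey); lra. }
      destruct (H f Hf) as [_ [_ [h [[_ Hh] Hfh]]]].
      specialize (Hfh x Hx). specialize (Hh x). unfold f in Hfh; rewrite Tx in Hfh.
      destruct d; simpl in *; lra.
Qed.

Theorem corollary3p5 (g : R -> R) (hg : continuity g) :
  (forall X : (R -> Prop) -> Prop, in_K (below g) X <-> is_CL_family X) /\
  (forall X : (R -> Prop) -> Prop, in_K (above g) X <-> is_CL_family X).
Proof.
  split; intro X; [apply K_below | apply K_above]; exact hg.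
Qed.
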